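(* Let $\lambda,\mu\in\mathbb{C}$ satisfy one of: (i) $\mu\notin\frac12\mathbb{Z}$; (ii) $\mu\in\frac12+\mathbb{Z}$ and $\lambda\notin\{-3,-1,1\}$; (iii) $\mu\in\mathbb{Z}$ and $\lambda\neq-1$. Let $L=\widetilde{L_{\lambda,\mu}}^1$ and let $\Delta_j(L)$ be the space of $\frac12$-derivations of $L$ of degree $j\in\mathbb{Z}$. If $\lambda\neq1$, then $\Delta_0(L)=\langle\mathrm{Id}\rangle$ and $\Delta_j(L)=0$ for $j\neq0$. If $\lambda=1$ (so we are in case (i) or (iii)), then $\Delta_j(L)$ consists exactly of the maps $c\,\delta_{j,0}\mathrm{Id}+\varphi_{j,\alpha}$ with $c,\alpha\in\mathbb{C}$, where $\varphi_{j,\alpha}(L_n)=\alpha M_{n+j}$ for all $n\in\mathbb{Z}$ and $\varphi_{j,\alpha}$ vanishes on all $M_n$, $Y_{n+\frac12}$ and on $C_L$.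
   Context: For $\lambda,\mu\in\mathbb{C}$, $\widetilde{L_{\lambda,\mu}}^1$ is the complex Lie algebra with basis $\{L_n,M_n,Y_{n+\frac12},C_L\mid n\in\mathbb{Z}\}$, $C_L$ central, and nonzero brackets $[L_m,L_n]=(n-m)L_{m+n}+\frac{m^3-m}{12}\delta_{m+n,0}C_L$, $[L_m,M_n]=(n-\lambda m+2\mu)M_{m+n}$, $[L_m,Y_{n+\frac12}]=(n+\frac12-\frac{\lambda+1}{2}m+\mu)Y_{m+n+\frac12}$, $[Y_{m+\frac12},Y_{n+\frac12}]=(n-m)M_{m+n+1}$. It is $\frac12\mathbb{Z}$-graded by $W_0=\langle L_0,M_0,C_L\rangle$, $W_n=\langle L_n,M_n\rangle$ ($n\neq0$), $W_{n+\frac12}=\langle Y_{n+\frac12}\rangle$. A $\frac12$-derivation is a linear map $\varphi$ with $\varphi([x,y])=\frac12([\varphi(x),y]+[x,\varphi(y)])$; it has degree $g$ if $\varphi(W_h)\subseteq W_{g+h}$ for all $h\in\frac12\mathbb{Z}$. *)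

(* Defs.v *)
(* The Lie algebra L~_{lambda,mu}^1 over the complex numbers,
   realized as the free C-vector space (finitely supported formal linear
   combinations, multinomials' monoid-algebra type {malg C[idx]}) on the basis
   {L_n, M_n, Y_{n+1/2}, C_L | n in Z}. *)
From HB Require Import structures.
From mathcomp Require Import all_boot all_order all_algebra.
From mathcomp Require Import Rstruct.
From mathcomp Require Import complex.
From mathcomp Require Import finmap.
From mathcomp.multinomials Require Import monalg.

Set Implicit Arguments.
Unset Strict Implicit.
Unset Printing Implicit Defensive.

Import Order.TTheory GRing.Theory Num.Theory.
Local Open Scope ring_scope.

Definition C : Type := (Rdefinitions.R)[i].
HB.instance Definition _ := GRing.Field.on C.

(* Basis indices: IL n = L_n, IM n = M_n, IY n = Y_{n+1/2}, IC = C_L. *)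
Inductive idx : Type := IL of int | IM of int | IY of int | IC.

Definition idx_code (k : idx) : nat * int :=
  match k with IL n => (0%N, n) | IM n => (1%N, n) | IY n => (2%N, n) | IC => (3%N, 0) end.
Definition idx_decode (p : nat * int) : option idx :=
  match p with
  | (0%N, n) => Some (IL n) | (1%N, n) => Some (IM n)
  | (2%N, n) => Some (IY n) | (3%N, _) => Some IC | _ => None end.
Lemma idx_codeK : pcancel idx_code idx_decode. Proof. by case. Qed.
HB.instance Definition _ := Countable.copy idx (pcan_type idx_codeK).

Definition LV : Type := {malg C[idx]}.

Definition bv (k : idx) : LV := << k >>.

Definition br_basis (lam mu : C) (a b : idx) : LV :=
  match a, b with
  | IL m, IL n => ((n - m)%:~R) *: bv (IL (m + n))
                  + ((m ^+ 3 - m)%:~R / 12%:R * (m + n == 0)%:R) *: bv IC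
  | IL m, IM n => (n%:~R - lam * m%:~R + 2%:R * mu) *: bv (IM (m + n))
  | IM m, IL n => - ((m%:~R - lam * n%:~R + 2%:R * mu) *: bv (IM (n + m)))
  | IL m, IY n => (n%:~R + 2%:R^-1 - (lam + 1) / 2%:R * m%:~R + mu) *: bv (IY (m + n))
  | IY m, IL n => - ((m%:~R + 2%:R^-1 - (lam + 1) / 2%:R * n%:~R + mu) *: bv (IY (n + m)))
  | IY m, IY n => ((n - m)%:~R) *: bv (IM (m + n + 1))
  | _, _ => 0
  end.

Definition lbr (lam mu : C) (x y : LV) : LV :=
  \sum_(a <- msupp x) \sum_(b <- msupp y) (x@_a * y@_b) *: br_basis lam mu a b.

Definition deg (k : idx) : rat :=
  match k with
  | IL n => n%:~R | IM n => n%:~R | IY n => n%:~R + 2%:R^-1 | IC => 0 end.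

Definition inW (h : rat) (x : LV) : Prop :=
  forall k, k \in msupp x -> deg k = h.

Definition is_half_int (h : rat) : Prop := exists k : int, h = k%:~R / 2%:R.

Definition has_degree (g : rat) (phi : LV -> LV) : Prop :=
  forall h, is_half_int h -> forall x, inW h x -> inW (g + h) (phi x).

Definition half_derivation (lam mu : C) (phi : {linear LV -> LV}) : Prop :=
  forall x y, phi (lbr lam mu x y)
              = 2%:R^-1 *: (lbr lam mu (phi x) y + lbr lam mu x (phi y)).

Definition phi_ja (j : int) (alpha : C) (x : LV) : LV :=
  \sum_(a <- msupp x)
     x@_a *: (match a with IL n => alpha *: bv (IM (n + j)) | _ => 0 end).

Definition in_half_Z (z : C) : Prop := exists n : int, z = n%:~R / 2%:R.
Definition in_Z (z : C) : Prop := exists n : int, z = n%:~R.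
Definition in_half_plus_Z (z : C) : Prop := exists n : int, z = n%:~R + 2%:R^-1.

Definition params_ok (lam mu : C) : Prop :=
  ~ in_half_Z mu
  \/ (in_half_plus_Z mu /\ lam != -3%:R /\ lam != -1 /\ lam != 1)
  \/ (in_Z mu /\ lam != -1).

(* Main.v *)
Require Import Defs.
From HB Require Import structures.
From mathcomp Require Import all_boot all_order all_algebra.
From mathcomp Require Import Rstruct complex finmap.
From mathcomp.multinomials Require Import monalg.
From mathcomp Require Import zify ring lra.
Import GRing.Theory Num.Theory.
Local Open Scope fset_scope.
Local Open Scope ring_scope.

Definition RC := (Rdefinitions.R)[i].
Lemma two_neq0 : (2%:R : C) != 0.
Proof. have := pnatr_eq0 RC 2. simpl. move=> h. exact: (negbT h). Qed.
Lemma intC_eq0 (n : int) : ((n%:~R : C) == 0) = (n == 0).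
Proof. exact: (intr_eq0 RC n). Qed.
Lemma intC_inj (m n : int) : (m%:~R : C) = n%:~R -> m = n.
Proof. move=> h; apply/eqP; rewrite -subr_eq0 -intC_eq0 rmorphB /= h subrr //. Qed.

Lemma mcoeff_bv k k' : (bv k)@_k' = (k == k')%:R.
Proof. by rewrite /bv mcoeffU. Qed.
Lemma U_bv (c : C) k : << c *g k >> = c *: bv k.
Proof. by apply/malgP => k'; rewrite mcoeffZ !mcoeffU mulr_natr. Qed.

Definition Ex (v : idx -> LV) (x : LV) : LV := \sum_(a <- msupp x) x@_a *: v a.
Lemma Ex_incl v x S : msupp x `<=` S -> Ex v x = \sum_(a <- S) x@_a *: v a.
Proof.
move=> sub; rewrite /Ex; apply: big_fset_incl => // a _ /mcoeff_outdom ->.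
by rewrite scale0r.
Qed.
Lemma ExD v x y : Ex v (x + y) = Ex v x + Ex v y.
Proof.
rewrite (@Ex_incl v (x + y) (msupp x `|` msupp y)) ?msuppD_le //.
rewrite (@Ex_incl v x (msupp x `|` msupp y)) ?fsubsetUl //.
rewrite (@Ex_incl v y (msupp x `|` msupp y)) ?fsubsetUr //.
rewrite -big_split /=; apply: eq_bigr => a _; by rewrite mcoeffD scalerDl.
Qed.
Lemma ExZ v c x : Ex v (c *: x) = c *: Ex v x.
Proof.
rewrite (@Ex_incl v (c *: x) (msupp x)) ?msuppZ_le // /Ex scaler_sumr.
by apply: eq_bigr => a _; rewrite mcoeffZ scalerA.
Qed.
Lemma Ex0 v : Ex v 0 = 0.
Proof. by rewrite /Ex msupp0 big_seq_fset0. Qed.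
Lemma ExN v x : Ex v (- x) = - Ex v x.
Proof. by rewrite -scaleN1r ExZ scaleN1r. Qed.
Lemma ExB v x y : Ex v (x - y) = Ex v x - Ex v y.
Proof. by rewrite ExD ExN. Qed.
Lemma Ex_bv v k : Ex v (bv k) = v k.
Proof.
rewrite (@Ex_incl v (bv k) [fset k]) ?msuppU_le // big_seq_fset1.
by rewrite mcoeff_bv eqxx scale1r.
Qed.
Lemma Ex_id x : Ex bv x = x.
Proof.
rewrite {2}(monalgE x) /Ex; apply: eq_bigr => a _; by rewrite U_bv.
Qed.
Lemma Ex_lin (f : {linear LV -> LV}) v x : f (Ex v x) = Ex (fun a => f (v a)) x.
Proof. rewrite /Ex raddf_sum; apply: eq_bigr => a _; exact: linearZ. Qed.
Lemma Ex_ext v w x : (forall a, v a = w a) -> Ex v x = Ex w x.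
Proof. by move=> h; apply: eq_bigr => a _; rewrite h. Qed.
Lemma ExvD v w x : Ex (fun a => v a + w a) x = Ex v x + Ex w x.
Proof. by rewrite /Ex -big_split; apply: eq_bigr => a _; rewrite scalerDr. Qed.
Lemma ExvZ c v x : Ex (fun a => c *: v a) x = c *: Ex v x.
Proof. by rewrite /Ex scaler_sumr; apply: eq_bigr => a _; rewrite !scalerA mulrC. Qed.
Lemma Exv0 x : Ex (fun _ => 0) x = 0.
Proof. by rewrite /Ex big1 // => a _; rewrite scaler0. Qed.
Lemma phiE (f : {linear LV -> LV}) x : f x = Ex (fun a => f (bv a)) x.
Proof. by rewrite -{1}(Ex_id x) Ex_lin. Qed.

Section Br.
Variables lam mu : C.
Local Notation br := (br_basis lam mu).
Local Notation lb := (lbr lam mu).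
Lemma lbrE x y : lb x y = Ex (fun a => Ex (fun b => br a b) y) x.
Proof.
rewrite /lbr /Ex; apply: eq_bigr => a _; rewrite scaler_sumr.
by apply: eq_bigr => b _; rewrite scalerA.
Qed.
Lemma lbrDl x y z : lb (x + y) z = lb x z + lb y z.
Proof. by rewrite !lbrE ExD. Qed.
Lemma lbrZl c x z : lb (c *: x) z = c *: lb x z.
Proof. by rewrite !lbrE ExZ. Qed.
Lemma lbrDr x y z : lb z (x + y) = lb z x + lb z y.
Proof.
rewrite !lbrE -ExvD; apply: Ex_ext => a; by rewrite ExD.
Qed.
Lemma lbrZr c x z : lb z (c *: x) = c *: lb z x.
Proof. rewrite !lbrE -ExvZ; apply: Ex_ext => a; by rewrite ExZ. Qed.
Lemma lbr_bv a b : lb (bv a) (bv b) = br a b.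
Proof. by rewrite lbrE !Ex_bv. Qed.
Lemma lbr0l z : lb 0 z = 0.
Proof. by rewrite lbrE Ex0. Qed.
Lemma lbr0r z : lb z 0 = 0.
Proof. rewrite lbrE; rewrite (@Ex_ext _ (fun _ => 0)) ?Exv0 // => a; by rewrite Ex0. Qed.
End Br.


Definition eq_idxE :=
  ((fun a b : int => erefl : (IL a == IL b) = (a == b)),
   (fun a b : int => erefl : (IM a == IM b) = (a == b)),
   (fun a b : int => erefl : (IY a == IY b) = (a == b)),
   (fun a b : int => erefl : (IL a == IM b) = false),
   (fun a b : int => erefl : (IL a == IY b) = false),
   (fun a : int => erefl : (IL a == IC) = false),
   (fun a b : int => erefl : (IM a == IL b) = false),
   (fun a b : int => erefl : (IM a == IY b) = false),
   (fun a : int => erefl : (IM a == IC) = false),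
   (fun a b : int => erefl : (IY a == IL b) = false),
   (fun a b : int => erefl : (IY a == IM b) = false),
   (fun a : int => erefl : (IY a == IC) = false),
   (fun a : int => erefl : (IC == IL a) = false),
   (fun a : int => erefl : (IC == IM a) = false),
   (fun a : int => erefl : (IC == IY a) = false),
   (erefl : (IC == IC) = true)).

Lemma tR : (true%:R : C) = 1. Proof. by []. Qed.
Lemma fR : (false%:R : C) = 0. Proof. by []. Qed.

Lemma half_neq (a b : int) : (a%:~R + 2%:R^-1 : rat) != b%:~R.
Proof.
apply/eqP => H.
have H2 : ((2 * a + 1)%:~R : rat) = (2 * b)%:~R.
  by rewrite intrD !intrM -H; field.
move/intr_inj: H2; lia.
Qed.

Lemma is_half_deg k : is_half_int (deg k).
Proof.
rewrite /is_half_int; case: k => [n|n|n|] /=.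
- by exists (2 * n); rewrite intrM; field.
- by exists (2 * n); rewrite intrM; field.
- by exists (2 * n + 1); rewrite intrD intrM; field.
- by exists 0; rewrite mul0r.
Qed.

Lemma inW_bv k : inW (deg k) (bv k).
Proof.
move=> k0 /(fsubsetP (@msuppU_le _ _ k 1)); rewrite inE => /eqP -> //.
Qed.

Lemma repr_int (h : int) x : inW h%:~R x ->
  x = x@_(IL h) *: bv (IL h) + x@_(IM h) *: bv (IM h) + x@_IC *: bv IC
  /\ (h != 0 -> x@_IC = 0).
Proof.
move=> Hx; split; last first.
  move=> hn; apply/eqP; rewrite mcoeff_eq0; apply/negP => /Hx /= H.
  by move: hn; rewrite -(intr_eq0 rat) -H eqxx.
apply/malgP => k; rewrite !mcoeffD !mcoeffZ !mcoeff_bv.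
have [kin|kout] := boolP (k \in msupp x); last first.
  rewrite (mcoeff_outdom kout).
  case: k kout => [n|n|n|] kout; rewrite ?eq_idxE ?fR ?mulr0 ?addr0 ?add0r //.
  - by case: eqP => [E|]; rewrite ?tR ?fR ?mulr0 ?mulr1 // E (mcoeff_outdom kout).
  - by case: eqP => [E|]; rewrite ?tR ?fR ?mulr0 ?mulr1 // E (mcoeff_outdom kout).
  - by rewrite (mcoeff_outdom kout) mul0r.
move: (Hx _ kin); case: k kin => [n|n|n|] kin /=; rewrite ?eq_idxE.
- by move/intr_inj => ->; rewrite eqxx tR fR !mulr0 mulr1 !addr0.
- by move/intr_inj => ->; rewrite eqxx tR fR !mulr0 mulr1 addr0 add0r.
- by move=> H; move: (half_neq n h); rewrite H eqxx.
- by rewrite tR fR !mulr0 mulr1 !add0r.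
Qed.

Lemma repr_half (h : int) x : inW (h%:~R + 2%:R^-1) x ->
  x = x@_(IY h) *: bv (IY h).
Proof.
move=> Hx; apply/malgP => k; rewrite mcoeffZ mcoeff_bv.
have [kin|kout] := boolP (k \in msupp x); last first.
  rewrite (mcoeff_outdom kout).
  case: k kout => [n|n|n|] kout; rewrite ?eq_idxE ?fR ?mulr0 //.
  by case: eqP => [E|]; rewrite ?tR ?fR ?mulr0 ?mulr1 // E (mcoeff_outdom kout).
move: (Hx _ kin); case: k kin => [n|n|n|] kin /=; rewrite ?eq_idxE.
- move=> H; move: (half_neq h n); by rewrite -H eqxx.
- move=> H; move: (half_neq h n); by rewrite -H eqxx.
- move=> H; have : (n%:~R : rat) = h%:~R by apply: (addIr (2%:R^-1)).
  by move/intr_inj => ->; rewrite eqxx tR mulr1.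
- move=> H; move: (half_neq h 0); by rewrite -H eqxx.
Qed.


Section BrE.
Variables lam mu : C.
Definition brE :=
  ((fun m n : int => erefl : br_basis lam mu (IL m) (IL n) = ((n - m)%:~R) *: bv (IL (m + n))
                  + ((m ^+ 3 - m)%:~R / 12%:R * (m + n == 0)%:R) *: bv IC),
   (fun m n : int => erefl : br_basis lam mu (IL m) (IM n) = (n%:~R - lam * m%:~R + 2%:R * mu) *: bv (IM (m + n))),
   (fun m n : int => erefl : br_basis lam mu (IM m) (IL n) = - ((m%:~R - lam * n%:~R + 2%:R * mu) *: bv (IM (n + m)))),
   (fun m n : int => erefl : br_basis lam mu (IL m) (IY n) = (n%:~R + 2%:R^-1 - (lam + 1) / 2%:R * m%:~R + mu) *: bv (IY (m + n))),
   (fun m n : int => erefl : br_basis lam mu (IY m) (IL n) = - ((m%:~R + 2%:R^-1 - (lam + 1) / 2%:R * n%:~R + mu) *: bv (IY (n + m)))),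
   (fun m n : int => erefl : br_basis lam mu (IY m) (IY n) = ((n - m)%:~R) *: bv (IM (m + n + 1))),
   (fun m n : int => erefl : br_basis lam mu (IM m) (IM n) = 0),
   (fun m n : int => erefl : br_basis lam mu (IM m) (IY n) = 0),
   (fun m n : int => erefl : br_basis lam mu (IY m) (IM n) = 0),
   (fun m : int => erefl : br_basis lam mu (IL m) IC = 0),
   (fun m : int => erefl : br_basis lam mu (IM m) IC = 0),
   (fun m : int => erefl : br_basis lam mu (IY m) IC = 0),
   (fun m : int => erefl : br_basis lam mu IC (IL m) = 0),
   (fun m : int => erefl : br_basis lam mu IC (IM m) = 0),
   (fun m : int => erefl : br_basis lam mu IC (IY m) = 0),
   (erefl : br_basis lam mu IC IC = 0)).
End BrE.

Fact cA_key : unit. Proof. exact: tt. Qed.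
Fact cB_key : unit. Proof. exact: tt. Qed.
Fact cE_key : unit. Proof. exact: tt. Qed.
Fact cP_key : unit. Proof. exact: tt. Qed.
Fact cQ_key : unit. Proof. exact: tt. Qed.
Fact cF_key : unit. Proof. exact: tt. Qed.
Fact cG_key : unit. Proof. exact: tt. Qed.
Fact cR_key : unit. Proof. exact: tt. Qed.
Fact cS_key : unit. Proof. exact: tt. Qed.
Fact cT_key : unit. Proof. exact: tt. Qed.
Section Phi.
Variables (lam mu : C) (j : int) (phi : {linear LV -> LV}).
Hypothesis HD : half_derivation lam mu phi.
Hypothesis Hdeg : has_degree j%:~R phi.

Definition cA := locked_with cA_key (fun n : int => (phi (bv (IL n)))@_(IL (n + j))).
Lemma cAE n : cA n = (fun n : int => (phi (bv (IL n)))@_(IL (n + j))) n.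
Proof. by rewrite /cA unlock. Qed.
Definition cB := locked_with cB_key (fun n : int => (phi (bv (IL n)))@_(IM (n + j))).
Lemma cBE n : cB n = (fun n : int => (phi (bv (IL n)))@_(IM (n + j))) n.
Proof. by rewrite /cB unlock. Qed.
Definition cE := locked_with cE_key (fun n : int => (phi (bv (IL n)))@_IC).
Lemma cEE n : cE n = (fun n : int => (phi (bv (IL n)))@_IC) n.
Proof. by rewrite /cE unlock. Qed.
Definition cP := locked_with cP_key (fun n : int => (phi (bv (IM n)))@_(IL (n + j))).
Lemma cPE n : cP n = (fun n : int => (phi (bv (IM n)))@_(IL (n + j))) n.
Proof. by rewrite /cP unlock. Qed.
Definition cQ := locked_with cQ_key (fun n : int => (phi (bv (IM n)))@_(IM (n + j))).
Lemma cQE n : cQ n = (fun n : int => (phi (bv (IM n)))@_(IM (n + j))) n.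
Proof. by rewrite /cQ unlock. Qed.
Definition cF := locked_with cF_key (fun n : int => (phi (bv (IM n)))@_IC).
Lemma cFE n : cF n = (fun n : int => (phi (bv (IM n)))@_IC) n.
Proof. by rewrite /cF unlock. Qed.
Definition cG := locked_with cG_key (fun n : int => (phi (bv (IY n)))@_(IY (n + j))).
Lemma cGE n : cG n = (fun n : int => (phi (bv (IY n)))@_(IY (n + j))) n.
Proof. by rewrite /cG unlock. Qed.
Definition cR := locked_with cR_key ((phi (bv IC))@_(IL j)).
Lemma cRE : cR = (phi (bv IC))@_(IL j).
Proof. by rewrite /cR unlock. Qed.
Definition cS := locked_with cS_key ((phi (bv IC))@_(IM j)).
Lemma cSE : cS = (phi (bv IC))@_(IM j).
Proof. by rewrite /cS unlock. Qed.
Definition cT := locked_with cT_key ((phi (bv IC))@_IC).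
Lemma cTE : cT = (phi (bv IC))@_IC.
Proof. by rewrite /cT unlock. Qed.
Lemma deg_phi k : inW (j%:~R + deg k) (phi (bv k)).
Proof. exact: Hdeg (is_half_deg k) _ (inW_bv k). Qed.

Lemma phiL n : phi (bv (IL n)) = cA n *: bv (IL (n + j)) + cB n *: bv (IM (n + j)) + cE n *: bv IC.
Proof. have := deg_phi (IL n); rewrite /= -intrD addrC => /repr_int [] H _; rewrite [LHS]H ?cAE ?cBE ?cEE ?cPE ?cQE ?cFE ?cRE ?cSE ?cTE //. Qed.
Lemma phiM n : phi (bv (IM n)) = cP n *: bv (IL (n + j)) + cQ n *: bv (IM (n + j)) + cF n *: bv IC.
Proof. have := deg_phi (IM n); rewrite /= -intrD addrC => /repr_int [] H _; rewrite [LHS]H ?cAE ?cBE ?cEE ?cPE ?cQE ?cFE ?cRE ?cSE ?cTE //. Qed.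
Lemma phiY n : phi (bv (IY n)) = cG n *: bv (IY (n + j)).
Proof. have := deg_phi (IY n); rewrite /= addrA -intrD (addrC j) => H; rewrite cGE; exact: repr_half H. Qed.
Lemma phiC : phi (bv IC) = cR *: bv (IL j) + cS *: bv (IM j) + cT *: bv IC.
Proof. have := deg_phi IC; rewrite /= addr0 => /repr_int [] H _; rewrite [LHS]H ?cAE ?cBE ?cEE ?cPE ?cQE ?cFE ?cRE ?cSE ?cTE //. Qed.
Lemma cE0 n : n + j != 0 -> cE n = 0.
Proof. have := deg_phi (IL n); rewrite /= -intrD addrC => /repr_int [] _ H; rewrite ?cEE ?cFE ?cTE; exact: H. Qed.
Lemma cF0 n : n + j != 0 -> cF n = 0.
Proof. have := deg_phi (IM n); rewrite /= -intrD addrC => /repr_int [] _ H; rewrite ?cEE ?cFE ?cTE; exact: H. Qed.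
Lemma cT0 : j != 0 -> cT = 0.
Proof. have := deg_phi IC; rewrite /= addr0 => /repr_int [] _ H; rewrite ?cEE ?cFE ?cTE; exact: H. Qed.

Lemma HDc a b k : (phi (br_basis lam mu a b))@_k =
   2%:R^-1 * ((lbr lam mu (phi (bv a)) (bv b))@_k + (lbr lam mu (bv a) (phi (bv b)))@_k).
Proof. by rewrite -lbr_bv HD mcoeffZ mcoeffD. Qed.

End Phi.

Fact ideq_key : unit. Proof. exact: tt. Qed.
Definition ideq := locked_with ideq_key (fun k k' : idx => (k == k')%:R : C).
Lemma ideqE k k' : ideq k k' = (k == k')%:R.
Proof. by rewrite /ideq unlock. Qed.

Definition lin (l : seq (C * idx)) : LV := \sum_(p <- l) p.1 *: bv p.2.
Definition sc (c : C) (l : seq (C * idx)) := map (fun p => (c * p.1, p.2)) l.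
Definition coefl (l : seq (C * idx)) k := foldr (fun p acc => p.1 * ideq p.2 k + acc) 0 l.

Lemma lin_nil : lin [::] = 0. Proof. by rewrite /lin big_nil. Qed.
Lemma lin_cons p l : lin (p :: l) = p.1 *: bv p.2 + lin l. Proof. by rewrite /lin big_cons. Qed.
Lemma lin_cat l1 l2 : lin (l1 ++ l2) = lin l1 + lin l2. Proof. by rewrite /lin big_cat. Qed.
Lemma lin_sc c l : lin (sc c l) = c *: lin l.
Proof.
elim: l => [|p l IH]; first by rewrite /sc /= lin_nil scaler0.
by rewrite /sc /= lin_cons -/(sc c l) IH lin_cons scalerDr scalerA.
Qed.
Lemma lin_flatten (ls : seq (seq (C * idx))) : lin (flatten ls) = \sum_(l <- ls) lin l.
Proof. elim: ls => [|l ls IH]; by rewrite ?big_nil ?lin_nil //= lin_cat IH big_cons. Qed.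
Lemma mc_lin l k : (lin l)@_k = coefl l k.
Proof.
elim: l => [|p l IH]; first by rewrite lin_nil mcoeff0.
by rewrite lin_cons mcoeffD IH /= mcoeffZ mcoeff_bv ideqE.
Qed.
Lemma bv_lin k : bv k = lin [:: (1, k)].
Proof. by rewrite lin_cons lin_nil addr0 scale1r. Qed.

Section BrL.
Variables lam mu : C.
Definition brl (a b : idx) : seq (C * idx) :=
  match a, b with
  | IL m, IL n => [:: ((n - m)%:~R, IL (m + n));
                      ((m ^+ 3 - m)%:~R / 12%:R * (m + n == 0)%:R, IC)]
  | IL m, IM n => [:: (n%:~R - lam * m%:~R + 2%:R * mu, IM (m + n))]
  | IM m, IL n => [:: (- (m%:~R - lam * n%:~R + 2%:R * mu), IM (n + m))]
  | IL m, IY n => [:: (n%:~R + 2%:R^-1 - (lam + 1) / 2%:R * m%:~R + mu, IY (m + n))]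
  | IY m, IL n => [:: (- (m%:~R + 2%:R^-1 - (lam + 1) / 2%:R * n%:~R + mu), IY (n + m))]
  | IY m, IY n => [:: ((n - m)%:~R, IM (m + n + 1))]
  | _, _ => [::]
  end.
Lemma br_lin a b : br_basis lam mu a b = lin (brl a b).
Proof.
case: a => [m|m|m|]; case: b => [n|n|n|];
  rewrite /= ?lin_cons ?lin_nil ?addr0 ?scaleNr //.
Qed.
Definition lbrl (l1 l2 : seq (C * idx)) :=
  flatten (map (fun p => flatten (map (fun q => sc (p.1 * q.1) (brl p.2 q.2)) l2)) l1).
Lemma lbr_lin l1 l2 : lbr lam mu (lin l1) (lin l2) = lin (lbrl l1 l2).
Proof.
elim: l1 => [|p l1 IH]; first by rewrite lin_nil lbr0l /lbrl /=.
rewrite lin_cons lbrDl IH /lbrl /= lin_cat -/(lbrl l1 l2); congr (_ + _).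
rewrite lbrZl; elim: l2 {IH} => [|q l2 IH]; first by rewrite lin_nil lbr0r /= ?lin_nil ?scaler0.
rewrite lin_cons lbrDr lbrZr /= lin_cat -IH lin_sc lbr_bv br_lin.
by rewrite scalerDr !scalerA mulrC.
Qed.
End BrL.

Section PhiL.
Variables (lam mu : C) (j : int) (phi : {linear LV -> LV}).
Hypothesis HD : half_derivation lam mu phi.
Hypothesis Hdeg : has_degree j%:~R phi.
Definition phil (k : idx) : seq (C * idx) :=
  match k with
  | IL n => [:: (cA j phi n, IL (n + j)); (cB j phi n, IM (n + j)); (cE phi n, IC)]
  | IM n => [:: (cP j phi n, IL (n + j)); (cQ j phi n, IM (n + j)); (cF phi n, IC)]
  | IY n => [:: (cG j phi n, IY (n + j))]
  | IC => [:: (cR j phi, IL j); (cS j phi, IM j); (cT phi, IC)]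
  end.
Lemma phi_bv k : phi (bv k) = lin (phil k).
Proof.
case: k => [n|n|n|] /=; rewrite !lin_cons lin_nil addr0 ?addrA.
- exact: phiL.
- exact: phiM.
- exact: phiY.
- exact: phiC.
Qed.
Definition phill (l : seq (C * idx)) := flatten (map (fun p => sc p.1 (phil p.2)) l).
Lemma phi_lin l : phi (lin l) = lin (phill l).
Proof.
elim: l => [|p l IH]; first by rewrite lin_nil raddf0 /phill /= ?lin_nil.
rewrite lin_cons linearD linearZ IH /phill /= lin_cat -/(phill l) lin_sc -phi_bv. by [].

Qed.
Lemma HDl a b k : coefl (phill (brl lam mu a b)) k =
  2%:R^-1 * (coefl (lbrl lam mu (phil a) [:: (1, b)]) k + coefl (lbrl lam mu [:: (1, a)] (phil b)) k).
Proof.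
have := HD (bv a) (bv b).
rewrite lbr_bv br_lin phi_lin !phi_bv (bv_lin b) (bv_lin a) !lbr_lin.
move/(congr1 (mcoeff k)); rewrite mcoeffZ mcoeffD !mc_lin //.
Qed.
End PhiL.


Ltac dec_int := repeat match goal with
 | |- context [(?x == ?y :> int)] =>
    first [ have ->: (x == y) = true by apply/eqP; lia
          | have ->: (x == y) = false by apply/eqP; lia ] end.

Ltac fin := let H := fresh in move=> H;
  rewrite ?(rmorphD, rmorphN, rmorphB, rmorphM, rmorphXn, rmorph1) in H *;
  match type of H with ?a = ?b => match goal with |- ?c = ?d =>
    apply/eqP; rewrite -subr_eq0; apply/eqP;
    transitivity (a - b); [ring | by rewrite H subrr] end end.

Lemma mcZ (c : C) (x : LV) k : (c *: x)@_k = c * x@_k.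
Proof. exact: mcoeffZ. Qed.
Section Eqs.
Variables (lam mu : C) (j : int) (phi : {linear LV -> LV}).
Hypothesis HD : half_derivation lam mu phi.
Hypothesis Hdeg : has_degree j%:~R phi.
Local Notation cA := (cA j phi). Local Notation cB := (cB j phi).
Local Notation cE := (cE phi). Local Notation cP := (cP j phi).
Local Notation cQ := (cQ j phi). Local Notation cF := (cF phi).
Local Notation cG := (cG j phi). Local Notation cR := (cR j phi).
Local Notation cS := (cS j phi). Local Notation cT := (cT phi).

Ltac expand a b k :=
  have := @HDl lam mu j phi HD Hdeg a b k;
  cbn [coefl phill lbrl phil brl sc flatten map cat foldr fst snd];
  rewrite ?ideqE ?eq_idxE; dec_int; rewrite ?tR ?fR.

Lemma eqYY_M m n : (n - m)%:~R * cQ (m + n + 1) =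
   2%:R^-1 * (cG m * (n - (m + j))%:~R + cG n * ((n + j) - m)%:~R).
Proof.
expand (IY m) (IY n) (IM (m + n + 1 + j)).
fin.
Qed.

Lemma eqYY_L m n : (n - m)%:~R * cP (m + n + 1) = 0.
Proof. expand (IY m) (IY n) (IL (m + n + 1 + j)). fin. Qed.
Lemma eqYY_C m n : (n - m)%:~R * cF (m + n + 1) = 0.
Proof. expand (IY m) (IY n) IC. fin. Qed.
Lemma eqLY m n : (n%:~R + 2%:R^-1 - (lam+1)/2%:R * m%:~R + mu) * cG (m + n) =
  2%:R^-1 * (cA m * (n%:~R + 2%:R^-1 - (lam+1)/2%:R * (m+j)%:~R + mu)
           + cG n * ((n+j)%:~R + 2%:R^-1 - (lam+1)/2%:R * m%:~R + mu)).
Proof. expand (IL m) (IY n) (IY (m + n + j)). fin. Qed.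
Lemma eqLL_L m n (h : m + n != 0) : (n - m)%:~R * cA (m + n) =
  2%:R^-1 * (cA m * (n - (m + j))%:~R + cA n * ((n + j) - m)%:~R).
Proof. expand (IL m) (IL n) (IL (m + n + j)). fin. Qed.
Lemma eqLL_L0 m : (- m - m)%:~R * cA (m + - m) + (m ^+ 3 - m)%:~R / 12%:R * cR =
  2%:R^-1 * (cA m * (- m - (m + j))%:~R + cA (- m) * ((- m + j) - m)%:~R).
Proof. expand (IL m) (IL (- m)) (IL (m + - m + j)). fin. Qed.
Lemma eqLL_M m n (h : m + n != 0) : (n - m)%:~R * cB (m + n) =
  2%:R^-1 * (- (cB m * ((m + j)%:~R - lam * n%:~R + 2%:R * mu))
             + cB n * ((n + j)%:~R - lam * m%:~R + 2%:R * mu)).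
Proof. expand (IL m) (IL n) (IM (m + n + j)). fin. Qed.
Lemma eqLL_M0 m : (- m - m)%:~R * cB (m + - m) + (m ^+ 3 - m)%:~R / 12%:R * cS =
  2%:R^-1 * (- (cB m * ((m + j)%:~R - lam * (- m)%:~R + 2%:R * mu))
             + cB (- m) * ((- m + j)%:~R - lam * m%:~R + 2%:R * mu)).
Proof. expand (IL m) (IL (- m)) (IM (m + - m + j)). fin. Qed.
Lemma eqLL_C m n (h1 : m + n != 0) (h2 : m + n + j = 0) : (n - m)%:~R * cE (m + n) =
  2%:R^-1 * (cA m * (((m + j) ^+ 3 - (m + j))%:~R / 12%:R) + cA n * ((m ^+ 3 - m)%:~R / 12%:R)).
Proof. expand (IL m) (IL n) IC. fin. Qed.
Lemma eqLL_C0 m (hj : j = 0) : (- m - m)%:~R * cE (m + - m) + (m ^+ 3 - m)%:~R / 12%:R * cT =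
  2%:R^-1 * (cA m * (((m + j) ^+ 3 - (m + j))%:~R / 12%:R) + cA (- m) * ((m ^+ 3 - m)%:~R / 12%:R)).
Proof. expand (IL m) (IL (- m)) IC. fin. Qed.
End Eqs.


Lemma sub0_of (a b : C) : a = b -> a - b = 0.
Proof. by move=> ->; rewrite subrr. Qed.
Arguments sub0_of {a b}.
Ltac pushc := rewrite ?(intrD, intrN, intrB, intrM); rewrite ?rmorphXn ?(intrD, intrN, intrB, intrM) ?rmorph1 ?rmorph0.
Ltac startlc := apply/eqP; rewrite -subr_eq0; apply/eqP.
Ltac lc1_ c1 H1 := match type of H1 with ?a1 = ?b1 =>
  startlc; transitivity (c1 * (a1 - b1)); [pushc; field; try done | by rewrite (sub0_of H1) mulr0] end.
Ltac lc2_ c1 H1 c2 H2 := match type of H1 with ?a1 = ?b1 => match type of H2 with ?a2 = ?b2 =>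
  startlc; transitivity (c1 * (a1 - b1) + c2 * (a2 - b2)); [pushc; field; try done | by rewrite (sub0_of H1) (sub0_of H2) !mulr0 addr0] end end.
Ltac lc3_ c1 H1 c2 H2 c3 H3 := match type of H1 with ?a1 = ?b1 => match type of H2 with ?a2 = ?b2 =>
  match type of H3 with ?a3 = ?b3 =>
  startlc; transitivity (c1 * (a1 - b1) + c2 * (a2 - b2) + c3 * (a3 - b3)); [pushc; field; try done | by rewrite (sub0_of H1) (sub0_of H2) (sub0_of H3) !mulr0 !addr0] end end end.
Ltac lc4_ c1 H1 c2 H2 c3 H3 c4 H4 := match type of H1 with ?a1 = ?b1 => match type of H2 with ?a2 = ?b2 =>
  match type of H3 with ?a3 = ?b3 => match type of H4 with ?a4 = ?b4 =>
  startlc; transitivity (c1 * (a1 - b1) + c2 * (a2 - b2) + c3 * (a3 - b3) + c4 * (a4 - b4)); [pushc; field; try done | by rewrite (sub0_of H1) (sub0_of H2) (sub0_of H3) (sub0_of H4) !mulr0 !addr0] end end end end.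

Tactic Notation "lc1" ident(H1) "using" uconstr(c1) := let x1 := constr:((c1 : C)) in lc1_ x1 H1.
Tactic Notation "lc2" ident(H1) ident(H2) "using" uconstr(c1) "," uconstr(c2) := let x1 := constr:((c1 : C)) in let x2 := constr:((c2 : C)) in lc2_ x1 H1 x2 H2.
Tactic Notation "lc3" ident(H1) ident(H2) ident(H3) "using" uconstr(c1) "," uconstr(c2) "," uconstr(c3) :=
  let x1 := constr:((c1 : C)) in let x2 := constr:((c2 : C)) in let x3 := constr:((c3 : C)) in lc3_ x1 H1 x2 H2 x3 H3.
Tactic Notation "lc4" ident(H1) ident(H2) ident(H3) ident(H4) "using" uconstr(c1) "," uconstr(c2) "," uconstr(c3) "," uconstr(c4) :=
  let x1 := constr:((c1 : C)) in let x2 := constr:((c2 : C)) in let x3 := constr:((c3 : C)) in let x4 := constr:((c4 : C)) in lc4_ x1 H1 x2 H2 x3 H3 x4 H4.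

Lemma mulIC (x y : C) : x != 0 -> x * y = 0 -> y = 0.
Proof. by move=> nz /eqP; rewrite mulf_eq0 (negbTE nz) /= => /eqP. Qed.
Lemma intCnz (n : int) : n != 0 -> (n%:~R : C) != 0.
Proof. by rewrite intC_eq0. Qed.
Lemma mulI2 (y : C) : 2%:R * y = 0 -> y = 0.
Proof. exact: mulIC two_neq0. Qed.
Lemma mulIint (n : int) (y : C) : n != 0 -> n%:~R * y = 0 -> y = 0.
Proof. by move=> /intCnz; apply: mulIC. Qed.

Lemma par_lam3 lam mu (Hpar : params_ok lam mu) (k j : int) :
  k%:~R + 2%:R^-1 + mu - j%:~R = 0 -> lam + 3%:R != 0.
Proof.
move=> hw.
have hmu : mu = j%:~R - k%:~R - 2%:R^-1 by lc1 hw using 1.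
case: Hpar => [hi|[[_ [h3 _]]|[[n hz] _]]].
- by exfalso; apply: hi; exists (2 * (j - k) - 1); rewrite hmu; pushc; field.
- apply: contra h3 => h; by rewrite addr_eq0 in h.
- exfalso.
  have H2 : ((2 * n)%:~R : C) = (2 * (j - k) - 1)%:~R.
    rewrite hz in hmu; lc1 hmu using 2.
  move/intC_inj: H2; lia.
Qed.

Section Solve.
Variables (lam mu : C) (j : int) (phi : {linear LV -> LV}).
Hypothesis HD : half_derivation lam mu phi.
Hypothesis Hdeg : has_degree j%:~R phi.
Local Notation cA := (cA j phi). Local Notation cB := (cB j phi).
Local Notation cE := (cE phi). Local Notation cP := (cP j phi).
Local Notation cQ := (cQ j phi). Local Notation cF := (cF phi).
Local Notation cG := (cG j phi). Local Notation cR := (cR j phi).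
Local Notation cS := (cS j phi). Local Notation cT := (cT phi).
Local Notation E := (@eqYY_M lam mu j phi HD Hdeg).

Lemma cP0 k : cP k = 0.
Proof.
have H1 := @eqYY_L lam mu j phi HD Hdeg 0 (k - 1).
have H2 := @eqYY_L lam mu j phi HD Hdeg (-1) k.
have E1 : 0 + (k - 1) + 1 = k by lia.
have E2 : -1 + k + 1 = k by lia.
rewrite E1 in H1; rewrite E2 in H2.
apply: mulI2; lc2 H1 H2 using (-1), 1.
Qed.

Lemma cF0' k : cF k = 0.
Proof.
have H1 := @eqYY_C lam mu j phi HD Hdeg 0 (k - 1).
have H2 := @eqYY_C lam mu j phi HD Hdeg (-1) k.
have E1 : 0 + (k - 1) + 1 = k by lia.
have E2 : -1 + k + 1 = k by lia.
rewrite E1 in H1; rewrite E2 in H2.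
apply: mulI2; lc2 H1 H2 using (-1), 1.
Qed.

Lemma cA_nej n : n != j -> cA n = cA 0.
Proof.
move=> hn; have [->|n0] := eqVneq n 0; first by [].
have H := @eqLL_L lam mu j phi HD Hdeg 0 n ltac:(by rewrite add0r).
rewrite !add0r in H.
apply/eqP; rewrite -subr_eq0; apply/eqP; apply: (@mulIint (n - j)); first by rewrite subr_eq0.
lc1 H using 2.
Qed.

Lemma cA_all n : cA n = cA 0.
Proof.
have [->|hn] := eqVneq n j; last exact: cA_nej.
have [->|j0] := eqVneq j 0; first by [].
have H := @eqLL_L lam mu j phi HD Hdeg (- j) (j + j) ltac:(apply/eqP; lia).
have E1 : - j + (j + j) = j by lia.
have Hm : cA (- j) = cA 0 by apply: cA_nej; apply/eqP; lia.
have Hp : cA (j + j) = cA 0 by apply: cA_nej; apply/eqP; lia.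
rewrite E1 Hm Hp in H.
apply/eqP; rewrite -subr_eq0; apply/eqP; apply: (@mulIint (3 * j)); first by apply/eqP; lia.
lc1 H using 1.
Qed.

Lemma cR0 : cR = 0.
Proof.
have H := @eqLL_L0 lam mu j phi HD Hdeg 2.
rewrite (cA_all (2 + -2)) (cA_all 2) (cA_all (-2)) in H.
lc1 H using 2.
Qed.

Lemma third_diff : j != 0 -> cA 0 = 0.
Proof.
move=> j0.
have H0 := @eqLL_C lam mu j phi HD Hdeg 0 (- 0 - j) ltac:(apply/eqP; lia) ltac:(lia).
have H1 := @eqLL_C lam mu j phi HD Hdeg 1 (- 1 - j) ltac:(apply/eqP; lia) ltac:(lia).
have H2 := @eqLL_C lam mu j phi HD Hdeg 2 (- 2 - j) ltac:(apply/eqP; lia) ltac:(lia).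
have H3 := @eqLL_C lam mu j phi HD Hdeg 3 (- 3 - j) ltac:(apply/eqP; lia) ltac:(lia).
have E0 : 0 + (- 0 - j) = - j by lia.
have E1 : 1 + (- 1 - j) = - j by lia.
have E2 : 2 + (- 2 - j) = - j by lia.
have E3 : 3 + (- 3 - j) = - j by lia.
rewrite E0 (cA_all (- 0 - j)) in H0.
rewrite E1 (cA_all 1) (cA_all (- 1 - j)) in H1.
rewrite E2 (cA_all 2) (cA_all (- 2 - j)) in H2.
rewrite E3 (cA_all 3) (cA_all (- 3 - j)) in H3.
lc4 H3 H2 H1 H0 using (-2), 6, (-6), 2.
Qed.

Lemma haj : j%:~R * cA 0 = 0.
Proof. have [->|j0] := eqVneq j 0; first by rewrite mul0r. by rewrite third_diff // mulr0. Qed.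

Lemma cE_j0 : j = 0 -> cE 0 = 0 /\ cT = cA 0.
Proof.
move=> hj.
have H1 := @eqLL_C0 lam mu j phi HD Hdeg 1 hj.
have H2 := @eqLL_C0 lam mu j phi HD Hdeg 2 hj.
have F1 : 1 + j = 1 by lia. have F2 : 2 + j = 2 by lia.
rewrite F1 (cA_all 1) (cA_all (-1)) in H1.
rewrite F2 (cA_all 2) (cA_all (-2)) in H2.
have E1 : 1 + -1 = 0 :> int by lia. have E2 : 2 + -2 = 0 :> int by lia.
rewrite E1 in H1; rewrite E2 in H2.
have e0 : cE 0 = 0 by lc1 H1 using (-1/2%:R).
split => //. rewrite e0 in H2. lc1 H2 using 2.
Qed.

Lemma cE_all n : cE n = 0.
Proof.
have [hn|hn] := eqVneq (n + j) 0; last exact: (@cE0 j phi Hdeg n hn).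
have [j0|j0] := eqVneq j 0.
  have -> : n = 0 by lia.
  by case: (cE_j0 j0).
have H0 := @eqLL_C lam mu j phi HD Hdeg 0 (- 0 - j) ltac:(apply/eqP; lia) ltac:(lia).
have E0 : 0 + (- 0 - j) = n by lia.
rewrite E0 (cA_all (- 0 - j)) (third_diff j0) in H0.
apply: (@mulIint j); first by [].
lc1 H0 using (-1).
Qed.

Lemma cT_all : cT = if j == 0 then cA 0 else 0.
Proof.
case: eqP => [j0|/eqP j0]; first by case: (cE_j0 j0).
exact: (@cT0 j phi Hdeg j0).
Qed.

Lemma G_gen k : (k%:~R + 2%:R^-1 + mu - j%:~R) * (cG k - cA 0) = 0.
Proof.
have H := @eqLY lam mu j phi HD Hdeg 0 k.
have ha := haj.
rewrite add0r in H.
lc2 H ha using 2, (1 - (lam + 1) / 2%:R).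
Qed.

Lemma G_shift k m : (k%:~R + 2%:R^-1 + mu - j%:~R) = 0 -> m != 0 -> cG (k - m) = cA 0.
Proof.
move=> hw m0; have := G_gen (k - m).
have -> : ((k - m)%:~R + 2%:R^-1 + mu - j%:~R) = - m%:~R.
  by rewrite -[RHS]add0r -hw rmorphB /=; ring.
move=> /eqP; rewrite mulf_eq0 oppr_eq0 intC_eq0 (negbTE m0) /= subr_eq0 => /eqP //.
Qed.

Lemma G_exc k m : (k%:~R + 2%:R^-1 + mu - j%:~R) = 0 -> m != 0 ->
  ((k - m)%:~R + 2%:R^-1 - (lam + 1) / 2%:R * m%:~R + mu) * (cG k - cA 0) = 0.
Proof.
move=> hw m0.
have H := @eqLY lam mu j phi HD Hdeg m (k - m).
have E : m + (k - m) = k by lia.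
rewrite E (cA_all m) (@G_shift k m hw m0) in H.
have ha := haj.
lc2 H ha using 1, ((1 - (lam + 1) / 2%:R) / 2%:R).
Qed.

Hypothesis Hpar : params_ok lam mu.

Lemma cG_all k : cG k = cA 0.
Proof.
have := G_gen k; move/eqP; rewrite mulf_eq0 => /orP [/eqP hw|]; last by rewrite subr_eq0 => /eqP.
have l3 := @par_lam3 lam mu Hpar k j hw.
have H1 := @G_exc k 1 hw isT.
have H2 := @G_exc k 2 hw isT.
apply/eqP; rewrite -subr_eq0; apply/eqP; apply: (@mulIC ((lam + 3%:R) / 2%:R)).
  by rewrite mulf_neq0 // invr_neq0 // two_neq0.
lc2 H1 H2 using 1, (-1).
Qed.

Lemma cQ_all k : cQ k = cA 0.
Proof.
have H1 := @eqYY_M lam mu j phi HD Hdeg 0 (k - 1).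
have H2 := @eqYY_M lam mu j phi HD Hdeg (-1) k.
have E1 : 0 + (k - 1) + 1 = k by lia.
have E2 : -1 + k + 1 = k by lia.
rewrite E1 (cG_all 0) (cG_all (k - 1)) in H1; rewrite E2 (cG_all (-1)) (cG_all k) in H2.
apply/eqP; rewrite -subr_eq0; apply/eqP; apply: mulI2; lc2 H1 H2 using (-1), 1.
Qed.

Lemma B_gen n : (n%:~R - (j%:~R + 2%:R * mu)) * (cB n - cB 0) = (lam - 1) * n%:~R * cB 0.
Proof.
have [->|n0] := eqVneq n 0; first by rewrite subrr; pushc; ring.
have H := @eqLL_M lam mu j phi HD Hdeg 0 n ltac:(by rewrite add0r).
rewrite !add0r in H.
lc1 H using 2.
Qed.

Lemma B_ne (h : (lam - 1) * cB 0 = 0) n :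
  (n%:~R - (j%:~R + 2%:R * mu)) != 0 -> cB n = cB 0.
Proof.
move=> nz; have := B_gen n; rewrite mulrAC h mul0r => /eqP; rewrite mulf_eq0 (negbTE nz) /=.
by rewrite subr_eq0 => /eqP.
Qed.

Lemma Bl (h : (lam - 1) * cB 0 = 0) n : cB n = cB 0.
Proof.
have [nz|hu] := boolP ((n%:~R - (j%:~R + 2%:R * mu)) != 0); first exact: B_ne.
move/negPn/eqP: hu => hu.
have [->|n0] := eqVneq n 0; first by [].
have Bm : cB (- n) = cB 0.
  apply: B_ne => //.
  have -> : (- n)%:~R - (j%:~R + 2%:R * mu) = (- (n + n))%:~R by lc1 hu using 1.
  by apply: intCnz; apply/eqP; lia.
have Bp : cB (n + n) = cB 0.
  apply: B_ne => //.
  have -> : (n + n)%:~R - (j%:~R + 2%:R * mu) = n%:~R by lc1 hu using 1.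
  by apply: intCnz.
have H := @eqLL_M lam mu j phi HD Hdeg (- n) (n + n) ltac:(apply/eqP; lia).
have E : - n + (n + n) = n by lia.
rewrite E Bm Bp in H.
apply/eqP; rewrite -subr_eq0; apply/eqP; apply: (@mulIint (3 * n)); first by apply/eqP; lia.
lc2 H h using 1, (3%:R * n%:~R / 2%:R).
Qed.

Local Notation uu := (j%:~R + 2%:R * mu).

Lemma B0_cond : (lam - 1) * cB 0 = 0.
Proof.
have [->|l1] := eqVneq lam 1; first by rewrite subrr mul0r.
have g1 := B_gen 1. have g2 := B_gen 2. have g3 := B_gen 3. have g4 := B_gen 4.
have X12 := @eqLL_M lam mu j phi HD Hdeg 1 2 isT.
have X13 := @eqLL_M lam mu j phi HD Hdeg 1 3 isT.
have E12 : (1 + 2 = 3 :> int) by []. have E13 : (1 + 3 = 4 :> int) by [].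
rewrite E12 in X12; rewrite E13 in X13.
have P1 : (lam - 1) * (uu * (lam + 2%:R) - 3%:R * lam) * cB 0 = 0.
  lc4 X12 g3 g1 g2 using ((3%:R - uu) * (2%:R - uu) * (1 - uu)), (- ((2%:R - uu) * (1 - uu))),
     (- ((3%:R - uu) * (2%:R - uu) * (1 + uu - 2%:R * lam)) / 2%:R),
     ((3%:R - uu) * (1 - uu) * (2%:R + uu - lam) / 2%:R).
have P2 : (lam - 1) * (uu * (lam + 2%:R) - 4%:R * lam) * cB 0 = 0.
  lc4 X13 g4 g1 g3 using ((4%:R - uu) * (3%:R - uu) * (1 - uu) / 3%:R),
     (- (2%:R * (3%:R - uu) * (1 - uu)) / 3%:R),
     (- ((4%:R - uu) * (3%:R - uu) * (1 + uu - 3%:R * lam)) / 6%:R),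
     ((4%:R - uu) * (1 - uu) * (3%:R + uu - lam) / 6%:R).
have P3 : lam * ((lam - 1) * cB 0) = 0 by lc2 P1 P2 using 1, (-1).
have [l0|l0] := eqVneq lam 0; last by move: P3; apply: mulIC.
rewrite l0 in P1 g1 |- *.
have P4 : uu * cB 0 = 0 by lc1 P1 using (-1/2%:R).
have [u0|u0] := eqVneq uu 0; last by move: P4 => /(@mulIC _ _ u0) ->; rewrite mulr0.
have B1 : cB 1 = 0 by rewrite u0 in g1; lc1 g1 using 1.
have em := B_gen (-1); rewrite u0 l0 in em.
have Bm1 : cB (-1) = 0 by lc1 em using (-1).
have H := @eqLL_M0 lam mu j phi HD Hdeg 1.
have E : (1 + -1 = 0 :> int) by [].
rewrite E B1 Bm1 in H.
have -> : cB 0 = 0 by lc1 H using (-1/2%:R).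
by rewrite mulr0.
Qed.

Lemma cB_all n : cB n = cB 0.
Proof. exact: (Bl B0_cond). Qed.

Lemma cS0 : cS = 0.
Proof.
have H := @eqLL_M0 lam mu j phi HD Hdeg 2.
have E : (2 + -2 = 0 :> int) by [].
rewrite E (cB_all 2) (cB_all (-2)) in H.
have h := B0_cond.
lc2 H h using 2, (-4).
Qed.
End Solve.


Definition vja (j : int) (alpha : C) (k : idx) : LV :=
  match k with IL n => alpha *: bv (IM (n + j)) | _ => 0 end.
Lemma phi_ja_Ex j alpha x : phi_ja j alpha x = Ex (vja j alpha) x.
Proof. by []. Qed.
Lemma phi_ja0 j x : phi_ja j 0 x = 0.
Proof.
rewrite phi_ja_Ex (@Ex_ext _ (fun _ => 0)) ?Exv0 // => a.
by case: a => * //=; rewrite scale0r.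
Qed.

Definition lin1 (f : LV -> LV) := (forall x y, f (x + y) = f x + f y) /\ (forall c x, f (c *: x) = c *: f x).

Lemma lin1_sum (T : Type) (f : LV -> LV) (s : seq T) (F : T -> C) (v : T -> LV) : lin1 f ->
  f (\sum_(a <- s) F a *: v a) = \sum_(a <- s) F a *: f (v a).
Proof.
move=> [fD fZ]; elim: s => [|a s IH].
  by rewrite !big_nil; have := fZ 0 0; rewrite !scale0r.
by rewrite !big_cons fD fZ IH.
Qed.
Lemma lin1_Ex f v x : lin1 f -> f (Ex v x) = Ex (fun a => f (v a)) x.
Proof. by move=> hf; rewrite /Ex lin1_sum. Qed.

Lemma bilin_ext (F G : LV -> LV -> LV) :
  (forall y, lin1 (F^~ y)) -> (forall x, lin1 (F x)) ->
  (forall y, lin1 (G^~ y)) -> (forall x, lin1 (G x)) ->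
  (forall a b, F (bv a) (bv b) = G (bv a) (bv b)) -> forall x y, F x y = G x y.
Proof.
move=> F1 F2 G1 G2 hab x y.
rewrite -(Ex_id x) (lin1_Ex _ _ _ (F1 y)) (lin1_Ex _ _ _ (G1 y)).
apply: Ex_ext => a.
rewrite -(Ex_id y) (lin1_Ex _ _ _ (F2 _)) (lin1_Ex _ _ _ (G2 _)).
by apply: Ex_ext => b.
Qed.

Section Conv.
Variables (lam mu : C) (j : int) (alpha : C).
Local Notation lb := (lbr lam mu).
Local Notation pj := (phi_ja j alpha).

Lemma lin1_pj : lin1 pj.
Proof. by split=> *; rewrite !phi_ja_Ex ?ExD ?ExZ. Qed.
Lemma lin1_lbl y : lin1 (lb^~ y).
Proof. by split=> *; rewrite ?lbrDl ?lbrZl. Qed.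
Lemma lin1_lbr x : lin1 (lb x).
Proof. by split=> *; rewrite ?lbrDr ?lbrZr. Qed.

Lemma half_lem (d : C) (L Q1 Q2 : LV) :
  d *: L + 2%:R^-1 *: (Q1 + Q2) = 2%:R^-1 *: (d *: L + Q1 + (d *: L + Q2)).
Proof.
have -> : d *: L + Q1 + (d *: L + Q2) = (d + d) *: L + (Q1 + Q2).
  by rewrite scalerDl -!addrA; congr (_ + _); rewrite addrCA.
rewrite [RHS]scalerDr; congr (_ + _); rewrite scalerA; congr (_ *: _); by field.
Qed.


Lemma mcZ' (c : C) (x : LV) k : (c *: x)@_k = c * x@_k.
Proof. exact: mcoeffZ. Qed.

Lemma pj_basis (hl : lam = 1) a b : pj (br_basis lam mu a b) =
  2%:R^-1 *: (lb (pj (bv a)) (bv b) + lb (bv a) (pj (bv b))).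
Proof.
rewrite br_lin /lin (lin1_sum _ _ _ _ _ lin1_pj) !phi_ja_Ex !Ex_bv.
case: a => [m|m|m|]; case: b => [n|n|n|];
  rewrite ?big_cons ?big_nil /= ?phi_ja_Ex ?Ex_bv /= ?lbr0l ?lbr0r ?lbrZl ?lbrZr ?lbr_bv ?(brE lam mu)
   ?scaler0 ?addr0 ?add0r //.
all: try by rewrite scaler0.
have E1 : n + (m + j) = m + n + j by lia.
have E2 : m + (n + j) = m + n + j by lia.
rewrite E1 E2; apply/malgP => k.
rewrite !(mcZ', mcoeffD, mcoeffN, mcoeff_bv) hl.
by field.
Qed.

Lemma pj_half (h : lam = 1 \/ alpha = 0) x y :
  pj (lb x y) = 2%:R^-1 *: (lb (pj x) y + lb x (pj y)).
Proof.
case: h => [hl|ha]; last by rewrite ha !phi_ja0 lbr0l lbr0r addr0 scaler0.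
pose F x y := pj (lb x y).
pose G x y := 2%:R^-1 *: (lb (pj x) y + lb x (pj y)).
have := @bilin_ext F G; rewrite /F /G; apply.
- move=> y0; split=> [x1 x2|c x1]; by rewrite ?lbrDl ?lbrZl ?(proj1 lin1_pj) ?(proj2 lin1_pj).
- move=> x0; split=> [x1 x2|c x1]; by rewrite ?lbrDr ?lbrZr ?(proj1 lin1_pj) ?(proj2 lin1_pj).
- move=> y0; split=> [x1 x2|c x1].
    rewrite (proj1 lin1_pj) lbrDl lbrDl -scalerDr; congr (_ *: _).
    by rewrite -!addrA; congr (_ + _); rewrite addrCA.
  by rewrite (proj2 lin1_pj) lbrZl lbrZl -scalerDr !scalerA mulrC.
- move=> x0; split=> [x1 x2|c x1].
    rewrite (proj1 lin1_pj) lbrDr lbrDr -scalerDr; congr (_ *: _).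
    by rewrite -!addrA; congr (_ + _); rewrite addrCA.
  by rewrite (proj2 lin1_pj) lbrZr lbrZr -scalerDr !scalerA mulrC.
- move=> a b; rewrite lbr_bv; exact: pj_basis.
Qed.

Lemma inW0 h : inW h 0.
Proof. by move=> k; rewrite msupp0 inE. Qed.
Lemma inWD h x y : inW h x -> inW h y -> inW h (x + y).
Proof.
move=> hx hy k /(fsubsetP (msuppD_le x y)); rewrite inE => /orP [kx|ky]; [exact: hx | exact: hy].
Qed.
Lemma inWZ h c x : inW h x -> inW h (c *: x).
Proof. by move=> hx k /(fsubsetP (msuppZ_le c x)) /hx. Qed.
Lemma inW_sum (T : eqType) (h : rat) (s : seq T) (F : T -> LV) :
  (forall a, a \in s -> inW h (F a)) -> inW h (\sum_(a <- s) F a).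
Proof.
elim: s => [|a s IH] hs; first by rewrite big_nil; apply: inW0.
rewrite big_cons; apply: inWD; first by apply: hs; rewrite inE eqxx.
by apply: IH => b bs; apply: hs; rewrite inE bs orbT.
Qed.

Lemma deg_psi (c : C) : has_degree j%:~R (fun x => (if j == 0 then c else 0) *: x + pj x).
Proof.
move=> h _ x hx; apply: inWD.
  case: eqP => [->|_]; last by rewrite scale0r; apply: inW0.
  by rewrite add0r; apply: inWZ.
rewrite phi_ja_Ex /Ex; apply: inW_sum => a ain; apply: inWZ.
case: a ain => [n|n|n|] ain /=; try exact: inW0.
apply: inWZ => k /(fsubsetP (@msuppU_le _ _ (IM (n + j)) 1)); rewrite inE => /eqP -> /=.
by rewrite -(hx _ ain) /= intrD addrC.
Qed.

End Conv.

Section Final.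
Variables (lam mu : C) (j : int) (phi : {linear LV -> LV}).
Hypothesis HD : half_derivation lam mu phi.
Hypothesis Hdeg : has_degree j%:~R phi.
Hypothesis Hpar : params_ok lam mu.

Lemma phi_bv_form k : phi (bv k) =
  (if j == 0 then cA j phi 0 else 0) *: bv k + vja j (cB j phi 0) k.
Proof.
have hA := @cA_all lam mu j phi HD Hdeg. have hB := @cB_all lam mu j phi HD Hdeg. have hE := @cE_all lam mu j phi HD Hdeg.
have hP := @cP0 lam mu j phi HD Hdeg. have hF := @cF0' lam mu j phi HD Hdeg. have hQ := @cQ_all lam mu j phi HD Hdeg Hpar.
have hG := @cG_all lam mu j phi HD Hdeg Hpar. have hR := @cR0 lam mu j phi HD Hdeg. have hS := @cS0 lam mu j phi HD Hdeg.
have hT := @cT_all lam mu j phi HD Hdeg. have h3 := @third_diff lam mu j phi HD Hdeg.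
case: k => [n|n|n|] /=.
- rewrite (@phiL j phi Hdeg) hA hB hE scale0r addr0.
  case: eqP => [j0|/eqP j0]; first by rewrite j0 !addr0.
  by rewrite /= h3 // !scale0r add0r.
- rewrite (@phiM j phi Hdeg) hP hQ hF !scale0r addr0 add0r.
  case: eqP => [j0|/eqP j0]; first by rewrite j0 !addr0.
  by rewrite /= h3 // !scale0r addr0.
- rewrite (@phiY j phi Hdeg) hG.
  case: eqP => [j0|/eqP j0]; first by rewrite j0 !addr0.
  by rewrite /= h3 // !scale0r addr0.
- by rewrite (@phiC j phi Hdeg) hR hS hT !scale0r !add0r addr0.
Qed.

Lemma phi_form x : phi x =
  (if j == 0 then cA j phi 0 else 0) *: x + phi_ja j (cB j phi 0) x.
Proof.
rewrite (phiE phi x).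
have -> : (if j == 0 then cA j phi 0 else 0) *: x = Ex (fun a => (if j == 0 then cA j phi 0 else 0) *: bv a) x.
  by rewrite ExvZ Ex_id.
rewrite phi_ja_Ex -ExvD.
apply: Ex_ext => a; exact: phi_bv_form.
Qed.

Lemma cB0_ne1 : lam != 1 -> cB j phi 0 = 0.
Proof.
move=> l1; apply: (@mulIC (lam - 1)); first by rewrite subr_eq0.
exact: (@B0_cond lam mu j phi HD Hdeg).
Qed.
End Final.

Lemma conv (lam mu : C) (j : int) (c alpha : C) (h : lam = 1 \/ alpha = 0)
  (phi : {linear LV -> LV}) :
  (forall x, phi x = (if j == 0 then c else 0) *: x + phi_ja j alpha x) ->
  half_derivation lam mu phi /\ has_degree j%:~R phi.
Proof.
move=> Hc; split.
- move=> x y; rewrite !Hc lbrDl lbrDr !lbrZl !lbrZr (@pj_half lam mu j alpha h).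
  exact: half_lem.
- move=> h0 hh x hx; rewrite Hc; exact: (@deg_psi j alpha c h0 hh x hx).
Qed.

Theorem mainTheorem5 (lam mu : C) (Hpar : params_ok lam mu) :
  (lam != 1 ->
    forall (j : int) (phi : {linear LV -> LV}),
      (half_derivation lam mu phi /\ has_degree j%:~R phi) <->
      (exists c : C, forall x, phi x = (if j == 0 then c else 0) *: x))
  /\
  (lam = 1 ->
    forall (j : int) (phi : {linear LV -> LV}),
      (half_derivation lam mu phi /\ has_degree j%:~R phi) <->
      (exists c alpha : C, forall x,
          phi x = (if j == 0 then c else 0) *: x + phi_ja j alpha x)).
Proof.
split.
- move=> l1 j phi; split.
  + move=> [HD Hdeg]; exists (cA j phi 0) => x.
    by rewrite (@phi_form lam mu j phi HD Hdeg Hpar) (@cB0_ne1 lam mu j phi HD Hdeg l1) phi_ja0 addr0.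
  + move=> [c Hc]; apply: (@conv lam mu j c 0 (or_intror erefl)) => x.
    by rewrite phi_ja0 addr0.
- move=> l1 j phi; split.
  + move=> [HD Hdeg]; exists (cA j phi 0), (cB j phi 0) => x.
    exact: (@phi_form lam mu j phi HD Hdeg Hpar).
  + move=> [c [alpha Hc]]; exact: (@conv lam mu j c alpha (or_introl l1)).
Qed.
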